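(* Let $\ell_n>0$, $\sigma_{n,0}>0$, $\kappa_n\in\mathbb R$, $\sigma_{n,\pm1}\ge0$ for $n\in\mathbb N$, let $\sigma_n=\max(\sigma_{n,-1},\sigma_{n,1})$, and let $(x_n)_{n\in\mathbb N}$ be a positive solution with given $x_0\in\mathbb R$. Then: (i) for every $n\ge2$, $x_n\le \dfrac{\sqrt{\kappa_n^2+4\ell_n\sigma_{n,0}}-\kappa_n}{2\sigma_{n,0}}\le \sqrt{\ell_n/\sigma_{n,0}}+\kappa_n^-/\sigma_{n,0}$; (ii) if $n\ge2$ satisfies $\sigma_n\le\sigma_{n,0}<2\sigma_n$ and $-2(\sigma_{n,0}-\sigma_n)\sqrt{\ell_n}\le\kappa_n\sqrt{2\sigma_n-\sigma_{n,0}}$, then $x_n\le\sqrt{\ell_n}/\sqrt{2\sigma_n-\sigma_{n,0}}$; the same bound holds for $n=1$ if $\sigma_1\le\sigma_{1,0}<2\sigma_1$ and $-2(\sigma_{1,0}-\sigma_1)\sqrt{\ell_1}\le(\sigma_{1,-1}x_0+\kappa_1)\sqrt{2\sigma_1-\sigma_{1,0}}$.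
   Context: $\mathbb N=\{1,2,3,\dots\}$; $a^-=(|a|-a)/2$. A positive solution with given $x_0\in\mathbb R$ is a sequence $(x_n)_{n\in\mathbb N}$ of positive reals satisfying $\ell_n = x_n(\sigma_{n,1}x_{n+1}+\sigma_{n,0}x_n+\sigma_{n,-1}x_{n-1})+\kappa_n x_n$ for all $n\in\mathbb N$. *)

(* Defs.v *)
From Stdlib Require Import Reals Lra Lia.
Open Scope R_scope.

Definition negpart (a : R) : R := (Rabs a - a) / 2.

(* Indices n range over N = {1,2,...}; coefficient sequences are nat -> R
   whose value at 0 is irrelevant.  x 0 is the given x_0 (any real). *)
Definition positive_solution (ell sigp sig0 sigm kappa x : nat -> R) : Prop :=
  forall n : nat, (1 <= n)%nat ->
    0 < x n /\
    ell n = x n * (sigp n * x (S n) + sig0 n * x n + sigm n * x (n - 1)%nat)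
            + kappa n * x n.

(* Main.v *)
Require Import Defs.
From Stdlib Require Import Reals Lra Psatz.
Open Scope R_scope.

Lemma core (s a l k x : R) : 0 < s -> 0 < a -> a <= s -> 0 < l -> 0 < x ->
  s * x^2 + k * x <= l -> - (s - a) * sqrt l <= k * sqrt a ->
  x <= sqrt l / sqrt a.
Proof.
  intros Hs Ha Has Hl Hx Hq Hc.
  pose proof (sqrt_lt_R0 a Ha) as Hr. pose proof (sqrt_lt_R0 l Hl) as Hq0.
  pose proof (sqrt_sqrt a (Rlt_le _ _ Ha)) as Ea.
  pose proof (sqrt_sqrt l (Rlt_le _ _ Hl)) as El.
  set (r := sqrt a) in *. set (q := sqrt l) in *.
  apply (Rmult_le_reg_r r); [lra|]. unfold Rdiv. rewrite Rmult_assoc, Rinv_l by lra.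
  rewrite Rmult_1_r. destruct (Rle_or_lt (x*r) q) as [H|H]; [lra|exfalso].
  assert (H1 : (s - a) * (x*r) >= (s-a) * q) by nra.
  assert (H2 : ((s-a)*x + k) * r >= 0) by nra.
  assert (H3 : (s-a)*x + k >= 0).
  { destruct (Rle_or_lt 0 ((s-a)*x+k)); [lra|nra]. }
  assert (H4 : s*x^2 + k*x >= a*x^2) by nra.
  assert (H5 : (x*r)^2 > q^2) by nra.
  nra.
Qed.

Lemma quad (s l k x : R) : 0 < s -> 0 < l -> 0 < x -> s * x^2 + k * x <= l ->
  x <= (sqrt (k ^ 2 + 4 * l * s) - k) / (2 * s) /\
  (sqrt (k ^ 2 + 4 * l * s) - k) / (2 * s) <= sqrt (l / s) + negpart k / s.
Proof.
  intros Hs Hl Hx Hq.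
  assert (Hpos : 0 <= k^2 + 4*l*s) by nra.
  pose proof (sqrt_sqrt _ Hpos) as ED. pose proof (sqrt_pos (k^2+4*l*s)) as HD.
  set (D := sqrt (k^2+4*l*s)) in *.
  split.
  - apply (Rmult_le_reg_r (2*s)); [lra|]. unfold Rdiv. rewrite Rmult_assoc, Rinv_l by lra.
    rewrite Rmult_1_r.
    destruct (Rle_or_lt (x*(2*s)) (D-k)) as [H|H]; [lra|exfalso].
    assert (H' : (2*s*x+k)^2 > D^2) by nra. nra.
  - assert (Hls : 0 <= l/s) by (apply Rlt_le, Rdiv_lt_0_compat; lra).
    pose proof (sqrt_sqrt _ Hls) as E2. pose proof (sqrt_pos (l/s)) as H2.
    set (t := sqrt (l/s)) in *.
    assert (Et : t*t*s = l) by (rewrite E2; unfold Rdiv; rewrite Rmult_assoc, Rinv_l; lra).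
    assert (HD2 : D <= Rabs k + 2*t*s).
    { destruct (Rle_or_lt D (Rabs k + 2*t*s)) as [H|H]; [lra|exfalso].
      pose proof (Rabs_pos k). pose proof (pow2_abs k).
      assert (HA : 0 <= Rabs k + 2*t*s) by nra.
      assert (D*D > (Rabs k + 2*t*s)*(Rabs k + 2*t*s)).
      { apply Rmult_le_0_lt_compat; lra. }
      assert (0 <= Rabs k * t * s) by (apply Rmult_le_pos; [apply Rmult_le_pos|]; lra).
      nra. }
    unfold negpart. apply (Rmult_le_reg_r (2*s)); [lra|].
    replace ((D - k) / (2 * s) * (2 * s)) with (D - k) by (field; lra).
    replace ((t + (Rabs k - k) / 2 / s) * (2 * s)) with (2*t*s + Rabs k - k) by (field; lra).
    lra.
Qed.

Theorem mainTheorem6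
  (ell sigp sig0 sigm kappa x : nat -> R)
  (Hell : forall n : nat, (1 <= n)%nat -> 0 < ell n)
  (Hsig0 : forall n : nat, (1 <= n)%nat -> 0 < sig0 n)
  (Hsigp : forall n : nat, (1 <= n)%nat -> 0 <= sigp n)
  (Hsigm : forall n : nat, (1 <= n)%nat -> 0 <= sigm n)
  (Hsol : positive_solution ell sigp sig0 sigm kappa x) :
  let sigma := fun n : nat => Rmax (sigm n) (sigp n) in
  (* (i) *)
  (forall n : nat, (2 <= n)%nat ->
     x n <= (sqrt (kappa n ^ 2 + 4 * ell n * sig0 n) - kappa n) / (2 * sig0 n) /\
     (sqrt (kappa n ^ 2 + 4 * ell n * sig0 n) - kappa n) / (2 * sig0 n)
       <= sqrt (ell n / sig0 n) + negpart (kappa n) / sig0 n) /\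
  (* (ii), n >= 2 *)
  (forall n : nat, (2 <= n)%nat ->
     sigma n <= sig0 n -> sig0 n < 2 * sigma n ->
     - 2 * (sig0 n - sigma n) * sqrt (ell n)
       <= kappa n * sqrt (2 * sigma n - sig0 n) ->
     x n <= sqrt (ell n) / sqrt (2 * sigma n - sig0 n)) /\
  (* (ii), n = 1 *)
  (sigma 1%nat <= sig0 1%nat -> sig0 1%nat < 2 * sigma 1%nat ->
     - 2 * (sig0 1%nat - sigma 1%nat) * sqrt (ell 1%nat)
       <= (sigm 1%nat * x 0%nat + kappa 1%nat) * sqrt (2 * sigma 1%nat - sig0 1%nat) ->
     x 1%nat <= sqrt (ell 1%nat) / sqrt (2 * sigma 1%nat - sig0 1%nat)).
Proof.
  intros sigma.
  assert (Hb : forall n, (2 <= n)%nat -> sig0 n * x n ^ 2 + kappa n * x n <= ell n).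
  { intros n Hn. destruct (Hsol n ltac:(lia)) as [Hx He].
    destruct (Hsol (S n) ltac:(lia)) as [Hx1 _].
    destruct (Hsol (n-1)%nat ltac:(lia)) as [Hx2 _].
    pose proof (Hsigp n ltac:(lia)). pose proof (Hsigm n ltac:(lia)).
    assert (0 <= sigp n * x (S n)) by (apply Rmult_le_pos; lra).
    assert (0 <= sigm n * x (n-1)%nat) by (apply Rmult_le_pos; lra).
    rewrite He. nra. }
  split; [|split].
  - intros n Hn. destruct (Hsol n ltac:(lia)) as [Hx _].
    apply quad; auto with arith; try (apply Hsig0; lia); try (apply Hell; lia).
  - intros n Hn H1 H2 H3. destruct (Hsol n ltac:(lia)) as [Hx _].
    assert (Hm : sigm n <= sigma n /\ sigp n <= sigma n) by (unfold sigma; split; [apply Rmax_l|apply Rmax_r]).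
    pose proof (Hsigm n ltac:(lia)).
    apply (core (sig0 n) _ _ (kappa n)); try lra; try (apply Hsig0; lia); try (apply Hell; lia).
    apply Hb; lia.
  - intros H1 H2 H3. destruct (Hsol 1%nat ltac:(lia)) as [Hx He].
    destruct (Hsol 2%nat ltac:(lia)) as [Hx1 _].
    assert (Hm : sigm 1%nat <= sigma 1%nat /\ sigp 1%nat <= sigma 1%nat) by (unfold sigma; split; [apply Rmax_l|apply Rmax_r]).
    pose proof (Hsigm 1%nat ltac:(lia)). pose proof (Hsigp 1%nat ltac:(lia)).
    apply (core (sig0 1%nat) _ _ (sigm 1%nat * x 0%nat + kappa 1%nat)); try lra.
    all: try (apply Hsig0; lia); try (apply Hell; lia).
    assert (0 <= sigp 1%nat * x 2%nat) by (apply Rmult_le_pos; lra).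
    rewrite He. simpl (1-1)%nat. nra.
Qed.
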